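(* There is a constant $c > 0$ such that every chordal graph on $n$ vertices has at least $c \cdot 2^n$ perfect elimination orderings; that is, the number of perfect elimination orderings of an $n$-vertex chordal graph is $\Omega(2^n)$.
   Context: A graph is chordal if every cycle of length at least 4 has a chord (an edge joining two non-consecutive vertices of the cycle). A vertex is simplicial if its neighbourhood is a clique. A perfect elimination ordering (PEO) of a graph $G$ is an ordering $(v_1, \ldots, v_n)$ of $V(G)$ such that for each $i$, the set of neighbours of $v_i$ in the subgraph induced by $\{v_i, v_{i+1}, \ldots, v_n\}$ is a clique. *)

(* Defs.v *)
From Stdlib Require Export Reals.
From mathcomp Require Import all_boot.
From mathcomp Require Import perm.
Set Implicit Arguments. Unset Strict Implicit. Unset Printing Implicit Defensive.

(* A simple graph on vertex set 'I_n: a symmetric irreflexive relation e. *)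

Definition is_graph_cycle (n : nat) (e : rel 'I_n) (c : seq 'I_n) : Prop :=
  uniq c /\ cycle e c.

Definition cyc_consecutive (k i j : nat) : bool :=
  (j == i.+1) || ((i == 0) && (j == k.-1)).

Definition has_chord (n : nat) (e : rel 'I_n) (c : seq 'I_n) : Prop :=
  exists x y : 'I_n, [/\ x \in c, y \in c, index x c < index y c,
                        ~~ cyc_consecutive (size c) (index x c) (index y c) &
                        e x y].

Definition chordal (n : nat) (e : rel 'I_n) : Prop :=
  forall c : seq 'I_n, is_graph_cycle e c -> 4 <= size c -> has_chord e c.

(* An ordering (v_0, ..., v_{n-1}) of the vertices is encoded by the
   bijection s : 'I_n -> 'I_n, v_i = s i. *)
Definition is_peo (n : nat) (e : rel 'I_n) (s : {perm 'I_n}) : bool :=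
  [forall i : 'I_n, forall j : 'I_n, forall k : 'I_n,
     [&& i < j, i < k, j != k, e (s i) (s j) & e (s i) (s k)] ==> e (s j) (s k)].

Definition num_peo (n : nat) (e : rel 'I_n) : nat :=
  #|[set s : {perm 'I_n} | is_peo e s]|.

(* Main.v *)
Require Import Defs.
From Stdlib Require Import Reals.
From mathcomp Require Import all_boot.
From mathcomp Require Import all_boot perm zify.
From Stdlib Require Import Lra.
Set Implicit Arguments. Unset Strict Implicit. Unset Printing Implicit Defensive.

Section Chordal.
Variable n : nat.
Local Notation T := 'I_n.
Variable e : rel T.
Hypothesis esym : symmetric e.
Hypothesis eirr : irreflexive e.
Hypothesis ech : chordal e.

Lemma last_take (x : T) s i : i <= size s -> last x (take i s) = nth x (x :: s) i.
Proof.
elim: s x i => [|z s IH] x [|i] //= Hi.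
by rewrite IH // (set_nth_default x) //=; lia.
Qed.

Lemma path_drop x s j : path e x s -> j <= size s -> path e (nth x (x::s) j) (drop j s).
Proof.
move=> Hp Hj; move: Hp; rewrite -{1}(cat_take_drop j s) cat_path => /andP[_].
by rewrite last_take.
Qed.

Lemma path_cut x s i j : path e x s -> i <= size s ->
  path e (nth x (x::s) i) (drop j s) -> path e x (take i s ++ drop j s).
Proof.
move=> Hp Hi Hd; rewrite cat_path last_take // Hd andbT.
by move: Hp; rewrite -{1}(cat_take_drop i s) cat_path => /andP[].
Qed.

Lemma lemL (D : {set T}) a x y : x != y -> e a x -> e a y ->
  (forall z, z \in D -> ~~ e a z) -> a \notin D ->
  forall p : seq T, path e x (rcons p y) -> all (mem D) p -> e x y.
Proof.
move=> xy ax ay Dna aD.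
case Exy: (e x y) => //.
have xD : x \notin D by apply/negP => /Dna; rewrite ax.
have yD : y \notin D by apply/negP => /Dna; rewrite ay.
move=> p; have [k Hk] : exists k, size p <= k by exists (size p).
elim: k p Hk => [|k IH] p Hk.
  by case: p Hk => // _; rewrite /= Exy.
move=> Hp HD.
set s := rcons p y.
have red : forall i j, i < j -> j <= size p ->
    path e (nth x (x::s) i) (drop j s) -> false.
  move=> i j ij jp Hd.
  have Hs : take i s ++ drop j s = rcons (take i p ++ drop j p) y.
    rewrite /s drop_rcons // -cats1 takel_cat; last by lia.
    by rewrite -!cats1 catA.
  have := IH (take i p ++ drop j p).
  rewrite -Hs path_cut //; last first. rewrite /s size_rcons. lia.
  rewrite size_cat size_takel; last by lia.
  rewrite size_drop all_cat.
  have -> : all (mem D) (take i p).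
    by apply/allP => z /mem_take zp; move/allP: HD => /(_ z zp).
  have -> : all (mem D) (drop j p).
    by apply/allP => z /mem_drop zp; move/allP: HD => /(_ z zp).
  by move=> /(_ ltac:(lia) isT isT).
have nthp : forall i, i < size p -> nth x p i \in D.
  by move=> i Hi; move/allP: HD; apply; apply: mem_nth.
have Uq : uniq (x :: s).
  apply/negPn/negP => /(uniqPn x) [ii [jj [ij jq Heq]]].
  move: jq; rewrite /= size_rcons ltnS leq_eqVlt => /orP[/eqP jq|jq].
  - move: Heq; rewrite jq /= /s nth_rcons ltnn eqxx.
    case: ii ij => [|i] ij /=; first by move=> xy'; rewrite xy' eqxx in xy.
    rewrite nth_rcons; have -> : i < size p by lia.
    by move=> H; have := nthp i ltac:(lia); rewrite H (negbTE yD).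
  - suff: false by []; apply: (red ii jj); first by lia. by lia.
    rewrite Heq path_drop //; by rewrite /s size_rcons; lia.
have pn : 0 < size p.
  by case: p Hp {Hk HD red nthp Uq s} => //=; rewrite Exy.
have aq : a \notin x :: s.
  rewrite inE negb_or; apply/andP; split.
    by apply/negP => /eqP ax'; move: ax; rewrite ax' eirr.
  rewrite /s mem_rcons inE negb_or; apply/andP; split.
    by apply/negP => /eqP ay'; move: ay; rewrite ay' eirr.
  by apply/negP => /(allP HD) /=; rewrite (negbTE aD).
set c := rcons (x :: s) a.
have Hc : is_graph_cycle e c.
  split; first by rewrite /c rcons_uniq aq Uq.
  rewrite /c /s /= !rcons_path !last_rcons.
  by rewrite -rcons_path Hp /= (esym y a) ay ax.
have sc : size c = (size p).+3 by rewrite /c /s size_rcons /= size_rcons.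
have H4 : 4 <= size c by rewrite sc; exact: pn.
have [u [w [uc wc iuw nc euw]]] := ech Hc H4.
have Hu := nth_index x uc; have Hw := nth_index x wc.
have iwc := index_mem w c; rewrite wc in iwc.
move: iuw nc Hu Hw iwc; rewrite sc.
set iu := index u c; set iw := index w c => iuw nc Hu Hw iwc.
clearbody iu iw.
rewrite /cyc_consecutive /= in nc.
move: Hu Hw; rewrite /c !nth_rcons /= /s size_rcons.
case: (ltnP iw (size p).+2) => Hiw.
  have Hiu : iu < (size p).+2 by clear -Hiw iuw; lia.
  rewrite Hiu => Hu Hw.
  case: iw iuw nc Hiw Hw {iwc} => [|kk] iuw nc Hiw Hw; first by [].
  have Hk1 : iu < kk by move: nc; rewrite eqSS; clear -iuw; lia.
  apply: (red iu kk) => //.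
  rewrite (drop_nth x); last by rewrite /s size_rcons.
  rewrite /= Hu; move: Hw; rewrite /= => Hw; rewrite Hw euw /=.
  have := path_drop Hp (j := kk.+1); rewrite /= size_rcons => /(_ ltac:(clear -Hiw; lia)).
  by rewrite Hw.
have iwe : iw = (size p).+2 by clear -Hiw iwc; lia.
have Hiu : iu < (size p).+2 by clear -iwe iuw; lia.
rewrite Hiu iwe eqxx => Hu Hw.
case: iu iuw nc Hiu Hu {Hiw} => [|kk] iuw nc Hiu Hu.
  by move: nc; rewrite iwe eqxx /= => /eqP.
have Hk' : kk < size p by move: nc; rewrite iwe eqSS; clear -Hiu; lia.
move: Hu; rewrite /= nth_rcons Hk' => Hu.
have := nthp kk Hk'; rewrite Hu => /Dna.
by rewrite Hw esym euw.
Qed.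

Definition cond v (A : {set T}) :=
  [forall x in A, forall y in A, (e v x && e v y && (x != y)) ==> e x y].
Definition simp (A : {set T}) v := (v \in A) && cond v A.
Definition cliqueb (A : {set T}) :=
  [forall x in A, forall y in A, (x != y) ==> e x y].

Lemma condP v (A : {set T}) : reflect (forall x y, x \in A -> y \in A -> e v x -> e v y -> x != y -> e x y)
  (cond v A).
Proof.
apply: (iffP forall_inP) => [H x y xA yA vx vy xy|H x xA].
  by move/forall_inP: (H x xA) => /(_ y yA); rewrite vx vy xy.
by apply/forall_inP => y yA; apply/implyP => /andP[/andP[vx vy] xy]; apply: H.
Qed.

Lemma cliquebP (A : {set T}) : reflect (forall x y, x \in A -> y \in A -> x != y -> e x y) (cliqueb A).
Proof.
apply: (iffP forall_inP) => [H x y xA yA xy|H x xA].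
  by move/forall_inP: (H x xA) => /(_ y yA); rewrite xy.
by apply/forall_inP => y yA; apply/implyP; apply: H.
Qed.

Definition Pdirac (A : {set T}) :=
  cliqueb A \/ exists v1 v2, [/\ simp A v1, simp A v2, v1 != v2 & ~~ e v1 v2].

Lemma path_memD (D : {set T}) z q :
  path [rel z w | (z \in D) && (w \in D) && e z w] z q -> all (mem D) q.
Proof.
elim: q z => //= w q IH z /andP[/andP[/andP[_ wD] _] Hq].
by rewrite wD (IH w Hq).
Qed.

Lemma claim (A : {set T}) :
  (forall B : {set T}, #|B| < #|A| -> Pdirac B) ->
  forall a u, a \in A -> u \in A -> u != a -> ~~ e a u ->
  exists v, [/\ simp A v, v != a & ~~ e a v].
Proof.
move=> IH a u aA uA ua nau.
pose D := [set z in A | (z != a) && ~~ e a z].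
pose eD := [rel z w | (z \in D) && (w \in D) && e z w].
pose C := [set z | connect eD u z].
pose S := [set s in A | (s \notin C) && [exists c in C, e c s]].
pose B := C :|: S.
have uD : u \in D by rewrite inE uA ua nau.
have f1 : forall z, z \in C -> z \in D.
  move=> z; rewrite inE => /connectP [q Hq ->].
  case/lastP: q Hq => [|q w] //=.
  by rewrite rcons_path last_rcons => /andP[_ /andP[/andP[_ ]]].
have f2 : forall c z, c \in C -> z \in D -> e c z -> z \in C.
  move=> c z cC zD cz; rewrite inE; apply: (connect_trans (y := c)).
    by move: cC; rewrite inE.
  by apply: connect1; rewrite /= (f1 c cC) zD cz.
have f3 : forall s, s \in S -> e a s.
  move=> s; rewrite inE => /andP[sA /andP[sC /exists_inP[c cC cs]]].
  case sD : (s \in D); first by rewrite (f2 c s cC sD cs) in sC.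
  move: sD; rewrite inE sA /= => /negbT; rewrite negb_and !negbK => /orP[/eqP sa|//].
  have := f1 c cC; rewrite inE -sa => /andP[_ /andP[_ ]].
  by rewrite esym cs.
have eDsym : symmetric eD.
  by move=> z w; rewrite /= (esym z w) (andbC (z \in D)).
have f4 : cliqueb S.
  apply/cliquebP => x y xS yS xy.
  have ax := f3 x xS; have ay := f3 y yS.
  move: xS yS; rewrite !inE => /andP[_ /andP[_ /exists_inP[cx cxC cxx]]].
  move=> /andP[_ /andP[_ /exists_inP[cy cyC cyy]]].
  have : connect eD cx cy.
    apply: (connect_trans (y := u)).
      by rewrite (sym_connect_sym eDsym); move: cxC; rewrite inE.
    by move: cyC; rewrite inE.
  case/connectP => q Hq Hl.
  apply: (@lemL D a x y xy ax ay _ _ (cx :: q)).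
  - by move=> z; rewrite inE => /andP[_ /andP[_ ]].
  - by rewrite inE eqxx andbF.
  - rewrite /= rcons_path -Hl (esym x cx) cxx cyy /= ?andbT.
    by apply: sub_path Hq => z w /andP[_ ].
  - by rewrite /= (f1 cx cxC) (path_memD Hq).
have sBA : B \subset A.
  apply/subsetP => z; rewrite inE => /orP[/f1|]; rewrite inE; first by case/andP.
  by case/andP.
have aB : a \notin B.
  rewrite inE negb_or; apply/andP; split.
    by apply/negP => /f1; rewrite inE eqxx andbF.
  by apply/negP => /f3; rewrite eirr.
have cB : #|B| < #|A|.
  apply: proper_card; apply/properP; split => //; by exists a.
have f7 : forall v, v \in C -> simp B v -> simp A v.
  move=> v vC /andP[vB /condP Hv]; rewrite /simp (subsetP sBA v vB) /=.
  apply/condP => x y xA yA vx vy xy.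
  have inB : forall z, z \in A -> e v z -> z \in B.
    move=> z zA vz; rewrite inE; case zC : (z \in C) => //=.
    by rewrite inE zA zC /=; apply/exists_inP; exists v.
  exact: (Hv x y (inB x xA vx) (inB y yA vy) vx vy xy).
have [v [vC vs]] : exists v, v \in C /\ simp B v.
  case: (IH B cB) => [/cliquebP Hcl|[v1 [v2 [s1 s2 v12 nv12]]]].
    have uC : u \in C by rewrite inE connect0.
    exists u; split => //; rewrite /simp inE uC /=.
    by apply/condP => x y xB yB _ _ xy; apply: Hcl.
  case v1C : (v1 \in C); first by exists v1.
  case v2C : (v2 \in C); first by exists v2.
  move: s1 s2 => /andP[v1B _] /andP[v2B _].
  move: v1B v2B; rewrite !in_setU v1C v2C /= => w1 w2.
  by move/cliquebP: f4 => /(_ v1 v2 w1 w2 v12); rewrite (negbTE nv12).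
exists v; split; first exact: f7.
  by have := f1 v vC; rewrite inE => /and3P[].
by have := f1 v vC; rewrite inE => /and3P[].
Qed.


Lemma dirac k : forall A : {set T}, #|A| <= k -> Pdirac A.
Proof.
elim: k => [|k IH] A HA.
  left; apply/cliquebP => x y xA.
  by move: HA xA; rewrite leqn0 => /eqP/cards0_eq ->; rewrite inE.
have IHA : forall B : {set T}, #|B| < #|A| -> Pdirac B.
  by move=> B HB; apply: IH; rewrite -ltnS; exact: leq_trans HB HA.
case: (boolP (cliqueb A)) => [|ncl]; first by left.
right; move: ncl => /forall_inPn [x xA /forall_inPn [y yA]].
rewrite negb_imply => /andP[xy nxy].
have [v1 [s1 v1x nxv1]] := claim IHA xA yA (ltac:(by rewrite eq_sym xy)) nxy.
have v1A : v1 \in A by case/andP: s1.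
have [v2 [s2 v2v1 nv1v2]] := claim IHA v1A xA (ltac:(by rewrite eq_sym)) (ltac:(by rewrite esym)).
by exists v1, v2; split => //; rewrite eq_sym.
Qed.

Lemma two_simp (A : {set T}) : 1 < #|A| ->
  exists v1 v2, [/\ simp A v1, simp A v2 & v1 != v2].
Proof.
move=> HA; case: (dirac (leqnn #|A|)) => [/cliquebP Hcl|[v1 [v2 [s1 s2 v12 _]]]].
  have [x [y [xA yA xy]]] := card_gt1P HA.
  exists x, y; split => //; rewrite /simp ?xA ?yA /=;
    by apply/condP => u w uA wA _ _ uw; apply: Hcl.
by exists v1, v2.
Qed.

Fixpoint peoseq (l : seq T) : bool :=
  if l is v :: l' then cond v [set z in l'] && peoseq l' else true.

Lemma count_peo k : forall A : {set T}, #|A| = k.+1 ->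
  exists L : seq (seq T), [/\ uniq L,
    (forall l, l \in L -> [/\ uniq l, [set z in l] = A & peoseq l]) &
    2 ^ k <= size L].
Proof.
elim: k => [|k IH] A HA.
  have /cards1P [v Av] : #|A| == 1 by rewrite HA.
  exists [:: [:: v]]; split => //.
  move=> l; rewrite inE => /eqP ->; split => //.
    by apply/setP => z; rewrite Av !inE.
  by rewrite /= andbT; apply/condP => x y; rewrite inE.
have [v1 [v2 [s1 s2 v12]]] : exists v1 v2, [/\ simp A v1, simp A v2 & v1 != v2] by apply: two_simp; rewrite HA.
have sub : forall v, simp A v -> exists L : seq (seq T), [/\ uniq L,
    (forall l, l \in L -> [/\ uniq (v :: l), [set z in v :: l] = A & peoseq (v :: l)]) &
    2 ^ k <= size L].
  move=> v /andP[vA cv].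
  have [L [UL HL SL]] := IH (A :\ v) (ltac:(by move: HA; rewrite (cardsD1 v) vA => -[])).
  exists L; split => // l /HL [Ul El Pl].
  have vl : v \notin l by apply/negP => vl; move/setP: (El) => /(_ v); rewrite !inE vl eqxx.
  split; first by rewrite /= vl Ul.
    apply/setP => z; move/setP: (El) => /(_ z); rewrite !inE => Hz.
    by case: (z =P v) => [->|zv] //=; rewrite Hz; case: (z =P v).
  rewrite /= Pl andbT El; apply/condP => x y xA yA; move/condP: cv; apply;
    by move: xA yA; rewrite !inE => /andP[] _ ? /andP[] _ ?.
have [L1 [U1 H1 S1]] := sub v1 s1.
have [L2 [U2 H2 S2]] := sub v2 s2.
exists (map (cons v1) L1 ++ map (cons v2) L2); split.
- rewrite cat_uniq !map_inj_uniq ?U1 ?U2 ?andbT //=; try by move=> a b [].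
  apply/hasPn => l /mapP [l2 _ ->]; apply/negP => /mapP [l1 _ [E _]].
  by rewrite E eqxx in v12.
- move=> l; rewrite mem_cat => /orP[] /mapP [l' Hl ->].
    exact: H1.
  exact: H2.
- by rewrite size_cat !size_map expnS mul2n -addnn leq_add.
Qed.


Lemma peoseq_drop (l : seq T) i x0 : peoseq l -> i < size l ->
  cond (nth x0 l i) [set z in drop i.+1 l].
Proof.
elim: l i => [|v l IH] [|i] //=.
  by case/andP; rewrite drop0.
by case/andP => _ Pl Hi; apply: IH.
Qed.

Lemma peo_nth (l : seq T) x0 i j k : peoseq l -> uniq l -> i < j -> i < k ->
  j < size l -> k < size l -> j != k ->
  e (nth x0 l i) (nth x0 l j) -> e (nth x0 l i) (nth x0 l k) ->
  e (nth x0 l j) (nth x0 l k).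
Proof.
move=> Pl Ul ij ik js ks jk eij eik.
have /condP H := peoseq_drop x0 Pl (ltn_trans ij js).
have inD : forall m, i < m -> m < size l -> nth x0 l m \in [set z in drop i.+1 l].
  move=> m im ms; rewrite inE.
  have -> : nth x0 l m = nth x0 (drop i.+1 l) (m - i.+1) by rewrite nth_drop subnKC.
  by apply: mem_nth; rewrite size_drop ltn_sub2rE.
apply: H => //; [exact: inD | exact: inD | by rewrite nth_uniq].
Qed.

Definition perm_of (l : seq T) : {perm T} := insubd (1%g : {perm T}) [ffun i => nth i l i].

Lemma perm_ofE (l : seq T) : uniq l -> size l = n -> forall i, perm_of l i = nth i l i.
Proof.
move=> Ul Sl i.
have inj : injectiveb [ffun i => nth i l i].
  apply/injectiveP => a b; rewrite !ffunE => H.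
  apply/val_inj/eqP; rewrite -(nth_uniq a _ _ Ul) ?Sl ?ltn_ord //.
  by rewrite H (set_nth_default a) // Sl.
by rewrite -pvalE val_insubd inj ffunE.
Qed.

Lemma main_nat : 0 < n -> 2 ^ n.-1 <= num_peo e.
Proof.
move=> npos.
have [L [UL HL SL]] := count_peo (k := n.-1) (A := [set: T])
  (ltac:(by rewrite cardsT card_ord prednK)).
have Hsz : forall l, l \in L -> uniq l /\ size l = n.
  move=> l /HL [Ul El _]; split => //.
  by move/card_uniqP: Ul <-; rewrite -cardsE El cardsT card_ord.
apply: (leq_trans SL).
have -> : size L = size (map perm_of L) by rewrite size_map.
rewrite /num_peo cardE; apply: uniq_leq_size.
  rewrite map_inj_in_uniq // => l1 l2 H1 H2 E.
  have [U1 S1] := Hsz _ H1; have [U2 S2] := Hsz _ H2.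
  apply: (eq_from_nth (x0 := Ordinal npos)); first by rewrite S1 S2.
  move=> m; rewrite S1 => Hm.
  rewrite (set_nth_default (Ordinal Hm)) ?S1 // (@set_nth_default _ l2 (Ordinal Hm)) ?S2 //.
  by rewrite -[m]/(nat_of_ord (Ordinal Hm)) -!perm_ofE // E.
move=> s /mapP [l Hl ->]; rewrite mem_enum inE.
have [Ul Sl] := Hsz _ Hl; have [_ _ Pl] := HL l Hl.
apply/forallP => i; apply/forallP => j; apply/forallP => k; apply/implyP.
case/and5P => ij ik jk eij eik.
move: eij eik; rewrite !perm_ofE // (@set_nth_default _ l i j j) ?Sl //.
rewrite (@set_nth_default _ l i k k) ?Sl // => eij eik.
apply: (peo_nth (i := i)) => //; rewrite ?Sl //.
Qed.

End Chordal.

Lemma INR_expn2 k : INR (2 ^ k)%N = pow 2 k.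
Proof.
elim: k => [|k IH]; first by [].
rewrite expnS mult_INR IH /=.
ring.
Qed.

Local Open Scope R_scope.
Theorem mainTheorem4 :
  exists c : R, Rlt 0 c /\
    forall (n : nat) (e : rel 'I_n),
      symmetric e -> irreflexive e -> chordal e ->
      Rle (Rmult c (pow 2 n)) (INR (num_peo e)).
Proof.
exists (/2)%R; split; first lra.
move=> [|n] e Hs Hi Hc.
  have H1 : (0 < num_peo e)%N.
    rewrite /num_peo card_gt0; apply/set0Pn; exists 1%g; rewrite inE.
    by apply/forallP => -[].
  have := le_INR 1 (num_peo e) (elimTF leP H1).
  rewrite /= => H; lra.
have := main_nat Hs Hi Hc isT.
move=> /leP /le_INR; rewrite INR_expn2 /= => H; lra.
Qed.
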